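(* If $2 \leq a \leq b$ are integers, then $a^{b-1} \cdot b^{a-1} \geq P_a(a+b-1) \cdot P_b(a+b-1)$.
   Context: $P_k(m)$ denotes the number of integer partitions of $m$ into exactly $k$ positive parts. *)

(* Defs.v *)
From mathcomp Require Import all_boot.
Unset Printing Implicit Defensive.

(* A partition of m into exactly k positive parts, represented as its
   nonincreasing list of parts (p_1 >= ... >= p_k >= 1, sum = m).
   Parts are at most m, so we enumerate k-tuples over 'I_(m.+1). *)
Definition is_partition_k (m k : nat) (t : k.-tuple 'I_m.+1) : bool :=
  [&& sorted geq (map val t), all (fun x : 'I_m.+1 => 0 < val x) t
    & sumn (map val t) == m].

Definition P (k m : nat) : nat := #|[set t : k.-tuple 'I_m.+1 | @is_partition_k m k t]|.

(* Main.v *)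
Require Import Defs.
From mathcomp Require Import all_boot zify.

Lemma prefix_inj (s1 s2 : seq nat) : size s1 = size s2 ->
  (forall i, i < size s1 -> sumn (take i.+1 s1) = sumn (take i.+1 s2)) -> s1 = s2.
Proof.
move=> hs H; apply: (eq_from_nth (x0 := 0)) => // i hi.
have h2 : i < size s2 by rewrite -hs.
have := H i hi; rewrite (take_nth 0 hi) (take_nth 0 h2) !sumn_rcons.
case: i hi h2 => [|i] hi h2; first by rewrite !take0.
rewrite H; last by apply: ltnW.
by move/eqP; rewrite eqn_add2l => /eqP.
Qed.

Lemma sumn_take_mono (l : seq nat) i j : i <= j -> sumn (take i l) <= sumn (take j l).
Proof.
move=> hij; rewrite -(take_takel l hij).
rewrite -{2}(cat_take_drop i (take j l)) sumn_cat; exact: leq_addr.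
Qed.

Lemma sumn_pred (s : seq nat) : all (fun x => 0 < x) s ->
  sumn (map predn s) + size s = sumn s.
Proof.
elim: s => //= x s IH /andP [hx hs]; have := IH hs; lia.
Qed.

Lemma map_pred_inj (s1 s2 : seq nat) : all (fun x => 0 < x) s1 -> all (fun x => 0 < x) s2 ->
  map predn s1 = map predn s2 -> s1 = s2.
Proof.
elim: s1 s2 => [|x s1 IH] [|y s2] //= /andP [hx h1] /andP [hy h2] [exy e].
by rewrite (IH s2) //; congr (_ :: _); lia.
Qed.

Lemma count_lt_iota x r : count (fun j => j < x) (iota 0 r) = minn x r.
Proof.
elim: r => [|r IH]; first by rewrite minn0.
rewrite -addn1 iotaD count_cat IH /= add0n addn0; lia.
Qed.

Section Key.
Variables (k : nat) (S : nat -> nat).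
Hypothesis mono : forall i j, i <= j -> j < k -> S i <= S j.
Hypothesis kpos : 0 < k.
Definition gk j := find (fun i => j < S i) (iota 0 k).

Lemma gk_lt j : j < S k.-1 -> gk j < k.
Proof.
move=> hj; rewrite /gk -{2}(size_iota 0 k) -has_find.
apply/hasP; exists k.-1 => //; rewrite mem_iota; lia.
Qed.

Lemma gk_le j i : j < S k.-1 -> i < k -> (gk j <= i) = (j < S i).
Proof.
move=> hj hi; apply/idP/idP => h.
- have hg : gk j < k by apply: gk_lt.
  have := nth_find 0 (a := fun i => j < S i) (s := iota 0 k).
  rewrite has_find size_iota -/(gk j) => /(_ hg); rewrite nth_iota // add0n => h'.
  exact: leq_trans h' (mono _ _ h hi).
- rewrite leqNgt; apply/negP => hlt.
  have := before_find 0 hlt; rewrite nth_iota // add0n h //.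
Qed.

Lemma S_rec i : i < k -> S i <= S k.-1 ->
  S i = count (fun j => gk j <= i) (iota 0 (S k.-1)).
Proof.
move=> hi hS.
rewrite (@eq_in_count _ _ (fun j => j < S i)); last first.
  by move=> j; rewrite mem_iota add0n => /andP [_ hj]; rewrite gk_le.
rewrite count_lt_iota; lia.
Qed.
End Key.

Section Bound.
Variables k m : nat.
Definition mu (t : k.+1.-tuple 'I_m.+1) : seq nat := map predn (map val t).
Definition Sf t i := sumn (take i.+1 (mu t)).
Definition fmap t : {ffun 'I_(m - k.+1) -> 'I_k.+1} :=
  [ffun j : 'I_(m - k.+1) => inord (gk k.+1 (Sf t) j)].

Lemma Sf_mono t i j : i <= j -> j < k.+1 -> Sf t i <= Sf t j.
Proof. by move=> hij _; apply: sumn_take_mono. Qed.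

Lemma Sf_last t : is_partition_k m k.+1 t -> Sf t k = m - k.+1.
Proof.
case/and3P=> _ hp /eqP hs.
rewrite /Sf take_oversize; last by rewrite /mu !size_map size_tuple.
have := @sumn_pred (map val t); rewrite all_map size_map size_tuple.
move=> /(_ hp); rewrite /mu; lia.
Qed.

Lemma fmap_inj : {in [set t | is_partition_k m k.+1 t] &, injective fmap}.
Proof.
move=> t1 t2; rewrite !inE => h1 h2 e.
have eg : forall j, j < m - k.+1 -> gk k.+1 (Sf t1) j = gk k.+1 (Sf t2) j.
  move=> j hj; have := congr1 (fun F : {ffun _ -> _} => val (F (Ordinal hj))) e.
  rewrite /= !ffunE /= !inordK //; apply: gk_lt => //=.
  - by rewrite Sf_last.
  - by rewrite Sf_last.
have eS : forall i, i < k.+1 -> Sf t1 i = Sf t2 i.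
  move=> i hi.
  rewrite (@S_rec k.+1 (Sf t1) (Sf_mono t1) (ltn0Sn k) i hi); last exact: Sf_mono.
  rewrite (@S_rec k.+1 (Sf t2) (Sf_mono t2) (ltn0Sn k) i hi); last exact: Sf_mono.
  rewrite /= !Sf_last //; apply: eq_in_count => j.
  by rewrite mem_iota add0n => /andP [_ hj]; rewrite eg.
have emu : mu t1 = mu t2.
  apply: prefix_inj; first by rewrite /mu !size_map !size_tuple.
  by move=> i; rewrite /mu !size_map size_tuple => hi; apply: eS.
have ev : map val t1 = map val t2.
  apply: map_pred_inj => //.
  - by case/and3P: h1 => _ hp _; rewrite all_map.
  - by case/and3P: h2 => _ hp _; rewrite all_map.
by apply: val_inj; apply: (inj_map val_inj).
Qed.

Lemma Pbound : P k.+1 m <= k.+1 ^ (m - k.+1).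
Proof.
rewrite /P -(card_in_imset fmap_inj).
apply: leq_trans (max_card _) _.
by rewrite card_ffun !card_ord.
Qed.
End Bound.

Theorem corollary2p3p1 (a b : nat) :
  2 <= a -> a <= b ->
  P a (a + b - 1) * P b (a + b - 1) <= a ^ (b - 1) * b ^ (a - 1).
Proof.
case: a => [|a] // ha; case: b => [|b] // hb.
apply: leq_mul.
- by have := Pbound a (a.+1 + b.+1 - 1); have -> : a.+1 + b.+1 - 1 - a.+1 = b.+1 - 1 by lia.
- by have := Pbound b (a.+1 + b.+1 - 1); have -> : a.+1 + b.+1 - 1 - b.+1 = a.+1 - 1 by lia.
Qed.
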